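(* Let $\Omega\subset\mathbb{R}^2$ be bounded, open, connected with $0\in\Omega$ and $\sigma(\Omega)=\Omega$, where $\sigma(x_1,x_2)=(x_1,-x_2)$. Let $\lambda_N^0$ be an eigenvalue of $(E_0)$ and let $\varphi\in E(\lambda_N^0)\setminus\{0\}$. Let $\mathfrak S u=\bar u\circ\sigma$. Then: (i) if $\varphi=-\mathfrak S\varphi$, then $\omega(\varphi)=0$; (ii) if $\varphi=\mathfrak S\varphi$, then $\omega(\varphi)=\frac{\pi}{k(\varphi)}$; (iii) if $\omega(\varphi)\ne\frac{\pi}{k(\varphi)}$, then $k(\varphi-\mathfrak S\varphi)=k(\varphi)$; (iv) if $\omega(\varphi)\ne0$, then $k(\varphi+\mathfrak S\varphi)=k(\varphi)$.
   Context: $A_0(x)=\frac12\big(-\frac{x_2}{|x|^2},\frac{x_1}{|x|^2}\big)$; $H^{1,0}_0(\Omega,\mathbb{C})$ is the closure of $C_c^\infty(\Omega\setminus\{0\},\mathbb{C})$ in the completion of $\{u\in H^1\cap C^\infty(\Omega,\mathbb{C}):u$ vanishes near $0\}$ under the norm $(\|\nabla u\|^2_{L^2}+\|u\|^2_{L^2}+\|u/|x|\|^2_{L^2})^{1/2}$; $u$ is an eigenfunction of $(E_0)$ with eigenvalue $\lambda$ if $u\in H^{1,0}_0\setminus\{0\}$ and $\int_\Omega(i\nabla u+A_0u)\cdot\overline{(i\nabla v+A_0v)}=\lambda\int_\Omega u\bar v$ for all $v\in H^{1,0}_0$. A function $u$ is K-real if $e^{-it/2}u(r\cos t,r\sin t)$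 is real-valued; $E(\lambda_N^0)$ is the real vector space of K-real eigenfunctions with eigenvalue $\lambda_N^0$ (together with $0$); under $\sigma(\Omega)=\Omega$ it is invariant under $\mathfrak S$. It is known that for every $u\in E(\lambda_N^0)\setminus\{0\}$ there are unique $k(u)\in\mathbb{N}$ odd, $\beta(u)\in\mathbb{R}\setminus\{0\}$, $\omega(u)\in[0,\frac{2\pi}{k(u)})$ with $r^{-k(u)/2}u(r\cos t,r\sin t)\to\beta(u)e^{it/2}\sin(\frac{k(u)}2(t-\omega(u)))$ in $C^{1,\tau}([0,2\pi],\mathbb{C})$ as $r\to0^+$, for all $\tau\in(0,1)$. *)

(* Defs.v *)
(* R : realType, points of R^2 are pairs (R * R),
   complex numbers are encoded as pairs (Re, Im) : R * R. *)
From mathcomp Require Import all_boot all_order all_algebra.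
From mathcomp Require Import all_classical all_reals all_analysis.
Set Implicit Arguments. Unset Strict Implicit. Unset Printing Implicit Defensive.
Import Order.TTheory GRing.Theory Num.Theory numFieldNormedType.Exports.
Local Open Scope classical_set_scope.
Local Open Scope ring_scope.

Section AB.
Variable R : realType.
Local Notation pt := (R * R)%type.

Definition leb2 := product_measure1 (@lebesgue_measure R) (@lebesgue_measure R).

Definition sq2 (x : pt) : R := x.1 ^+ 2 + x.2 ^+ 2.
Definition sigma (x : pt) : pt := (x.1, - x.2).
Definition A0 (x : pt) : pt := ((- x.2) / (2 * sq2 x), x.1 / (2 * sq2 x)).

Definition caddf (u v : pt -> R * R) : pt -> R * R :=
  fun x => ((u x).1 + (v x).1, (u x).2 + (v x).2).
Definition cnegf (u : pt -> R * R) : pt -> R * R := fun x => (- (u x).1, - (u x).2).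
Definition csubf (u v : pt -> R * R) : pt -> R * R := caddf u (cnegf v).
Definition Sfrak (u : pt -> R * R) : pt -> R * R :=
  fun x => ((u (sigma x)).1, - (u (sigma x)).2).

Fixpoint Cn (n : nat) (f : pt -> R) : Prop :=
  match n with
  | 0 => continuous f
  | n'.+1 => continuous f /\ (forall x (v : pt), derivable f x v) /\
             (forall v : pt, Cn n' (fun x => 'D_v f x))
  end.
Definition smooth (f : pt -> R) : Prop := forall n, Cn n f.

Definition test_fun (Omega : set pt) (f : pt -> R) : Prop :=
  smooth f /\ exists K : set pt, [/\ compact K, K `<=` Omega `\ (0, 0) &
                                  forall x, ~ K x -> f x = 0].

Definition grad (f : pt -> R) (x : pt) : pt := ('D_(1, 0) f x, 'D_(0, 1) f x).

Definition sqd (a b : pt) : R := (a.1 - b.1) ^+ 2 + (a.2 - b.2) ^+ 2.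

(* u (complex, = (Re u, Im u)) belongs to H^{1,0}_0(Omega, C), with (weak)
   gradient G x = (grad Re u x, grad Im u x): u is the limit, in the norm
   (||grad .||^2 + ||.||^2 + ||./|x| ||^2)^{1/2}, of a sequence of
   C_c^infty(Omega\{0}, C) functions. *)
Definition H10 (Omega : set pt) (u : pt -> R * R) (G : pt -> pt * pt) : Prop :=
  [/\ measurable_fun Omega (fun x => (u x).1) /\ measurable_fun Omega (fun x => (u x).2),
      measurable_fun Omega (fun x => (G x).1.1) /\ measurable_fun Omega (fun x => (G x).1.2),
      measurable_fun Omega (fun x => (G x).2.1) /\ measurable_fun Omega (fun x => (G x).2.2) &
   exists phi : nat -> pt -> R * R,
     (forall n, test_fun Omega (fun x => (phi n x).1) /\ test_fun Omega (fun x => (phi n x).2)) /\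
     (fun n => (\int[leb2]_(x in Omega)
         ((sqd (phi n x) (u x))
          + sqd (grad (fun y => (phi n y).1) x) (G x).1
          + sqd (grad (fun y => (phi n y).2) x) (G x).2
          + sqd (phi n x) (u x) / sq2 x)%:E)%E) @ \oo --> 0%E].

Definition dot (a b : pt) : R := a.1 * b.1 + a.2 * b.2.

(* i grad u + A0 u = P + i Q  with u = a + i b *)
Definition Pm (u : pt -> R * R) (G : pt -> pt * pt) (x : pt) : pt :=
  ((A0 x).1 * (u x).1 - (G x).2.1, (A0 x).2 * (u x).1 - (G x).2.2).
Definition Qm (u : pt -> R * R) (G : pt -> pt * pt) (x : pt) : pt :=
  ((G x).1.1 + (A0 x).1 * (u x).2, (G x).1.2 + (A0 x).2 * (u x).2).

(* u is an eigenfunction of (E_0) with eigenvalue lam.  u is taken to be the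
   continuous representative on Omega \ {0}. *)
Definition eigenfunction (Omega : set pt) (lam : R) (u : pt -> R * R) : Prop :=
  (forall x, Omega x -> x <> (0, 0) ->
     {for x, continuous (fun y => (u y).1)} /\ {for x, continuous (fun y => (u y).2)}) /\
  exists G, [/\ H10 Omega u G,
    (\int[leb2]_(x in Omega) ((u x).1 ^+ 2 + (u x).2 ^+ 2)%:E != 0)%E &
    forall v Gv, H10 Omega v Gv ->
      (\int[leb2]_(x in Omega) (dot (Pm u G x) (Pm v Gv x) + dot (Qm u G x) (Qm v Gv x))%:E
        = lam%:E * \int[leb2]_(x in Omega) ((u x).1 * (v x).1 + (u x).2 * (v x).2)%:E)%E /\
      (\int[leb2]_(x in Omega) (dot (Qm u G x) (Pm v Gv x) - dot (Pm u G x) (Qm v Gv x))%:E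
        = lam%:E * \int[leb2]_(x in Omega) ((u x).2 * (v x).1 - (u x).1 * (v x).2)%:E)%E].

(* K-real: e^{-it/2} u(r cos t, r sin t) is real *)
Definition K_real (Omega : set pt) (u : pt -> R * R) : Prop :=
  forall r t, 0 < r -> Omega (r * cos t, r * sin t) ->
    cos (t / 2) * (u (r * cos t, r * sin t)).2
      - sin (t / 2) * (u (r * cos t, r * sin t)).1 = 0.

Definition zero_on (Omega : set pt) (u : pt -> R * R) : Prop :=
  forall x, Omega x -> x <> (0, 0) -> u x = (0, 0).

Definition Eset (Omega : set pt) (lam : R) (u : pt -> R * R) : Prop :=
  zero_on Omega u \/ (eigenfunction Omega lam u /\ K_real Omega u).

Definition C1tau_small (tau eps : R) (h : R -> R) : Prop :=
  [/\ forall t, derivable h t 1,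
      forall t, 0 <= t <= 2 * pi -> `|h t| <= eps /\ `|derive1 h t| <= eps &
      forall s t, 0 <= s <= 2 * pi -> 0 <= t <= 2 * pi ->
        `|derive1 h s - derive1 h t| <= eps * `|s - t| `^ tau].

(* r^{-k/2} u(r cos t, r sin t) -> beta e^{it/2} sin(k/2 (t - omega))
   in C^{1,tau}([0,2pi], C) as r -> 0+, for all tau in (0,1) *)
Definition expansion (u : pt -> R * R) (k : nat) (beta omega : R) : Prop :=
  forall tau, 0 < tau < 1 -> forall eps, 0 < eps ->
  exists delta, 0 < delta /\ forall r, 0 < r < delta ->
    C1tau_small tau eps (fun t => r `^ (- (k%:R / 2)) * (u (r * cos t, r * sin t)).1
                                  - beta * cos (t / 2) * sin (k%:R / 2 * (t - omega))) /\
    C1tau_small tau eps (fun t => r `^ (- (k%:R / 2)) * (u (r * cos t, r * sin t)).2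
                                  - beta * sin (t / 2) * sin (k%:R / 2 * (t - omega))).

Definition asym_data (u : pt -> R * R) (k : nat) (beta omega : R) : Prop :=
  [/\ odd k, beta != 0, 0 <= omega < 2 * pi / k%:R & expansion u k beta omega].

End AB.

(* Main.v *)
Require Import Defs.
From mathcomp Require Import all_boot all_order all_algebra.
From mathcomp Require Import all_classical all_reals all_analysis.
From mathcomp Require Import ring lra.
Import Order.TTheory GRing.Theory Num.Theory numFieldNormedType.Exports.
Local Open Scope classical_set_scope.
Local Open Scope ring_scope.

Section S.
Variable R : realType.

Lemma refl_deriv (x : R) : is_derive x 1 (fun t : R => 2 * pi - t) (-1).
Proof.
have -> : (fun t : R => 2 * pi - t) = (cst (2 * pi) - id)%R by apply/funext.
rewrite -[-1]sub0r. apply: is_deriveB.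
Qed.

Lemma C1_add tau e1 e2 (h g : R -> R) : C1tau_small tau e1 h -> C1tau_small tau e2 g ->
  C1tau_small tau (e1 + e2) (h + g).
Proof.
move=> [dh bh hh] [dg bg hg]; split.
- by move=> t; apply: derivableD.
- move=> t tI; have [b1 b2] := bh t tI; have [c1 c2] := bg t tI.
  rewrite derive1E deriveD // -!derive1E; split.
    by rewrite (le_trans (ler_normD _ _)) // lerD.
  by rewrite (le_trans (ler_normD _ _)) // lerD.
- move=> s t sI tI; rewrite !derive1E !deriveD // -!derive1E.
  have -> : forall a b c d : R, a + b - (c + d) = (a - c) + (b - d) by move=> *; ring.
  apply: le_trans (ler_normD _ _) _; rewrite mulrDl; apply: lerD; [exact: hh|exact: hg].
Qed.

Lemma C1_opp tau e (h : R -> R) : C1tau_small tau e h -> C1tau_small tau e (- h).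
Proof.
move=> [dh bh hh]; split.
- by move=> t; apply: derivableN.
- move=> t tI; have [b1 b2] := bh t tI.
  by rewrite derive1N // normrN /= normrN.
- move=> s t sI tI; rewrite !derive1N // -opprD normrN; exact: hh.
Qed.

Lemma C1_refl tau e (h : R -> R) : C1tau_small tau e h ->
  C1tau_small tau e (h \o (fun t => 2 * pi - t)).
Proof.
move=> [dh bh hh].
have D (t : R) : is_derive t (1:R) (h \o (fun t => 2 * pi - t)) (derive1 h (2 * pi - t) * -1).
  apply: is_derive1_comp; last exact: refl_deriv.
  by rewrite derive1E; apply: derivableP.
have I (t : R) : 0 <= t <= 2 * pi -> 0 <= 2 * pi - t <= 2 * pi.
  by move=> /andP[t0 t1]; apply/andP; split; lra.
split.
- by move=> t; apply: (@ex_derive _ _ _ _ _ _ _ (D t)).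
- move=> t tI; rewrite derive1E derive_val mulrN1 normrN.
  by have := bh _ (I t tI).
- move=> s t sI tI; rewrite !derive1E !derive_val !mulrN1 opprK addrC.
  have := hh _ _ (I t tI) (I s sI).
  by rewrite (_ : 2 * pi - t - (2 * pi - s) = s - t) //; ring.
Qed.

Lemma sin_npi (y : R) n : sin (y + n%:R * pi) = (-1) ^+ n * sin y.
Proof.
elim: n => [|n IH]; first by rewrite mul0r addr0 expr0 mul1r.
by rewrite -natr1 mulrDl mul1r addrA sinDpi IH exprS mulN1r mulNr.
Qed.

Lemma cos_refl (t : R) : cos ((2 * pi - t) / 2) = - cos (t / 2).
Proof.
rewrite (_ : (2 * pi - t) / 2 = - (t / 2) + pi); last by field.
by rewrite cosDpi cosN.
Qed.

Lemma sin_refl (t : R) : sin ((2 * pi - t) / 2) = sin (t / 2).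
Proof.
rewrite (_ : (2 * pi - t) / 2 = - (t / 2) + pi); last by field.
by rewrite sinDpi sinN opprK.
Qed.

Lemma sin_refl_k (k : nat) (t w : R) : odd k ->
  sin (k%:R / 2 * (2 * pi - t - w)) = sin (k%:R / 2 * (t + w)).
Proof.
move=> ok.
rewrite (_ : k%:R / 2 * (2 * pi - t - w) = - (k%:R / 2 * (t + w)) + k%:R * pi); last by field.
by rewrite sin_npi sinN -signr_odd ok expr1 mulN1r opprK.
Qed.

Lemma cos2pi_sub (t : R) : cos (2 * pi - t) = cos t.
Proof. by rewrite addrC mulr_natl cosD2pi cosN. Qed.

Lemma sin2pi_sub (t : R) : sin (2 * pi - t) = - sin t.
Proof. by rewrite addrC mulr_natl sinD2pi sinN. Qed.

Lemma exp_sub (phi : R * R -> R * R) k beta omega : odd k ->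
  expansion phi k beta omega ->
  expansion (csubf phi (Sfrak phi)) k (2 * beta * cos (k%:R / 2 * omega)) 0.
Proof.
move=> ok E tau ht eps he.
have [d [d0 Hd]] := E tau ht (eps / 2) (divr_gt0 he (ltr0Sn _ 1)).
exists d; split => // r hr; have [H1 H2] := Hd r hr.
rewrite (splitr eps); split.
- set h1 := (fun t => _) in H1.
  have -> : (fun t => r `^ (- (k%:R / 2)) * (csubf phi (Sfrak phi) (r * cos t, r * sin t)).1
       - 2 * beta * cos (k%:R / 2 * omega) * cos (t / 2) * sin (k%:R / 2 * (t - 0)))
     = (fun t => h1 t - h1 (2 * pi - t)).
    apply/funext => t; rewrite /h1 /csubf /caddf /cnegf /Sfrak /sigma /=.
    rewrite cos2pi_sub sin2pi_sub mulrN cos_refl sin_refl_k // subr0.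
    rewrite [k%:R / 2 * (t - omega)]mulrBr [k%:R / 2 * (t + omega)]mulrDr sinB sinD. ring.
  have -> : (fun t => h1 t - h1 (2 * pi - t)) = h1 + - (h1 \o (fun t => 2 * pi - t)) by apply/funext.
  apply: C1_add; first exact: H1. apply: C1_opp; apply: C1_refl; exact: H1.
- set h2 := (fun t => _) in H2.
  have -> : (fun t => r `^ (- (k%:R / 2)) * (csubf phi (Sfrak phi) (r * cos t, r * sin t)).2
       - 2 * beta * cos (k%:R / 2 * omega) * sin (t / 2) * sin (k%:R / 2 * (t - 0)))
     = (fun t => h2 t + h2 (2 * pi - t)).
    apply/funext => t; rewrite /h2 /csubf /caddf /cnegf /Sfrak /sigma /=.
    rewrite cos2pi_sub sin2pi_sub mulrN sin_refl sin_refl_k // subr0.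
    rewrite [k%:R / 2 * (t - omega)]mulrBr [k%:R / 2 * (t + omega)]mulrDr sinB sinD. ring.
  have -> : (fun t => h2 t + h2 (2 * pi - t)) = h2 + (h2 \o (fun t => 2 * pi - t)) by apply/funext.
  apply: C1_add; first exact: H2. apply: C1_refl; exact: H2.
Qed.

Lemma exp_add (phi : R * R -> R * R) k beta omega : odd k ->
  expansion phi k beta omega ->
  expansion (caddf phi (Sfrak phi)) k (2 * beta * sin (k%:R / 2 * omega)) (pi / k%:R).
Proof.
move=> ok E tau ht eps he.
have k0 : k%:R != 0 :> R by rewrite pnatr_eq0; move: ok; case: (k).
have [d [d0 Hd]] := E tau ht (eps / 2) (divr_gt0 he (ltr0Sn _ 1)).
exists d; split => // r hr; have [H1 H2] := Hd r hr.
have KE (t : R) : sin (k%:R / 2 * (t - pi / k%:R)) = - cos (k%:R / 2 * t).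
  rewrite (_ : k%:R / 2 * (t - pi / k%:R) = k%:R / 2 * t - pi / 2); last by field.
  exact: sinBpihalf.
rewrite (splitr eps); split.
- set h1 := (fun t => _) in H1.
  have -> : (fun t => r `^ (- (k%:R / 2)) * (caddf phi (Sfrak phi) (r * cos t, r * sin t)).1
       - 2 * beta * sin (k%:R / 2 * omega) * cos (t / 2) * sin (k%:R / 2 * (t - pi / k%:R)))
     = (fun t => h1 t + h1 (2 * pi - t)).
    apply/funext => t; rewrite /h1 /caddf /Sfrak /sigma /=.
    rewrite cos2pi_sub sin2pi_sub mulrN cos_refl sin_refl_k // KE.
    rewrite [k%:R / 2 * (t - omega)]mulrBr [k%:R / 2 * (t + omega)]mulrDr sinB sinD. ring.
  have -> : (fun t => h1 t + h1 (2 * pi - t)) = h1 + (h1 \o (fun t => 2 * pi - t)) by apply/funext.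
  apply: C1_add; first exact: H1. apply: C1_refl; exact: H1.
- set h2 := (fun t => _) in H2.
  have -> : (fun t => r `^ (- (k%:R / 2)) * (caddf phi (Sfrak phi) (r * cos t, r * sin t)).2
       - 2 * beta * sin (k%:R / 2 * omega) * sin (t / 2) * sin (k%:R / 2 * (t - pi / k%:R)))
     = (fun t => h2 t - h2 (2 * pi - t)).
    apply/funext => t; rewrite /h2 /caddf /Sfrak /sigma /=.
    rewrite cos2pi_sub sin2pi_sub mulrN sin_refl sin_refl_k // KE.
    rewrite [k%:R / 2 * (t - omega)]mulrBr [k%:R / 2 * (t + omega)]mulrDr sinB sinD. ring.
  have -> : (fun t => h2 t - h2 (2 * pi - t)) = h2 + - (h2 \o (fun t => 2 * pi - t)) by apply/funext.
  apply: C1_add; first exact: H2. apply: C1_opp; apply: C1_refl; exact: H2.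
Qed.
End S.
Lemma axis_ball (R : realType) (Omega : set (R * R)) : open Omega -> Omega (0, 0) ->
  exists2 e : R, 0 < e & forall r, `|r| < e -> Omega (r, 0).
Proof.
move=> oO O0.
have cf : continuous (fun r : R => (r, 0 : R)).
  move=> x; apply: (@cvg_pair _ _ _ _ (nbhs x) (nbhs (0:R))); [exact: cvg_id | exact: cvg_cst].
have := cf 0 Omega (oO _ O0).
move=> /nbhs_ballP[e e0 He]; exists e => // r hr; apply: He.
by rewrite /ball /= sub0r normrN.
Qed.

Lemma small_zero (R : realType) (x : R) : (forall eps, 0 < eps -> `|x| <= eps) -> x = 0.
Proof.
move=> H; apply/eqP; apply/negPn/negP => hx.
have h1 : 0 < `|x| by rewrite normr_gt0.
have h2 : 0 < `|x| / 2 by rewrite divr_gt0.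
have := H _ h2; lra.
Qed.

Theorem lemma7p1 (R : realType) (Omega : set (R * R)) (lam : R)
    (phi : R * R -> R * R) (k : nat) (beta omega : R) :
  open Omega -> bounded_set Omega -> connected Omega -> Omega (0, 0) ->
  @sigma R @` Omega = Omega ->
  Eset Omega lam phi -> ~ zero_on Omega phi ->
  asym_data phi k beta omega ->
  [/\ (forall x, Omega x -> x <> (0, 0) -> phi x = cnegf (Sfrak phi) x) -> omega = 0,
      (forall x, Omega x -> x <> (0, 0) -> phi x = Sfrak phi x) -> omega = pi / k%:R,
      omega <> pi / k%:R ->
        exists beta' omega', asym_data (csubf phi (Sfrak phi)) k beta' omega' &
      omega <> 0 ->
        exists beta' omega', asym_data (caddf phi (Sfrak phi)) k beta' omega'].
Proof.
move=> oO _ _ O0 _ _ _ [ok b0 /andP[w0 w1] E].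
have kp : (0 < k)%N by move: ok; case: (k).
have kR : 0 < k%:R :> R by rewrite ltr0n.
have pg := @pi_gt0 R.
have two0 : (2:R) != 0 by apply/negbT/gt_eqF; lra.
have wk : omega * k%:R < 2 * pi by rewrite -ltr_pdivlMr.
set B := k%:R / 2 * omega.
have BE : B = omega * k%:R / 2 by rewrite /B; field.
have B0 : 0 <= B by rewrite BE; apply: divr_ge0 => //; apply: mulr_ge0 => //; apply: ltW.
have Bpi : B < pi by rewrite BE; lra.
have [e e0 He] := @axis_ball R Omega oO O0.
have tau0 : 0 < (1 / 2 : R) < 1 by apply/andP; split; lra.
have Bom : B = pi / 2 -> omega = pi / k%:R.
  rewrite /B => h; rewrite -[omega]mul1r -(@mulVf _ (k%:R / 2)); last first.
    by rewrite mulf_neq0 // ?invr_eq0 gt_eqF.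
  by rewrite -mulrA h; field; rewrite gt_eqF.
have sinBpos : omega != 0 -> 0 < sin B.
  move=> wn; apply: sin_gt0_pi; rewrite Bpi andbT BE.
  apply: divr_gt0 => //; apply: mulr_gt0 => //; rewrite lt_neqAle eq_sym wn w0 //.
have cosB0 : omega <> pi / k%:R -> cos B != 0.
  move=> wn; apply/eqP => cB; apply: wn; apply: Bom.
  apply: cos_inj; rewrite ?in_itv /= ?B0 ?(ltW Bpi) //.
    by apply/andP; split; lra.
  by rewrite cB cos_pihalf.
split.
- move=> Hanti.
  have Z : beta * sin B = 0.
    apply: small_zero => eps he.
    have [d [d0 Hd]] := E (1 / 2) tau0 eps he.
    set m := Num.min d e.
    have m0 : 0 < m by rewrite lt_min d0 e0.
    have md : m <= d by rewrite ge_min lexx.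
    have me : m <= e by rewrite ge_min lexx orbT.
    have [[_ Hb _] _] := Hd (m / 2) ltac:(apply/andP; split; lra).
    have [Hc _] := Hb 0 ltac:(apply/andP; split; lra).
    have nz : (m / 2, 0) <> (0, 0) :> R * R by move=> [h]; lra.
    have Om : Omega (m / 2, 0) by apply: He; rewrite ger0_norm; lra.
    have P0 : (phi (m / 2, 0)).1 = 0.
      have := Hanti _ Om nz.
      rewrite /cnegf /Sfrak /sigma oppr0.
      move=> /(congr1 fst); cbn [fst snd] => h; lra.
    move: Hc; rewrite cos0 sin0 mulr1 mulr0 P0 mulr0 mul0r cos0 mulr1 !sub0r mulrN sinN.
    by rewrite normrN mulrN normrN.
  apply/eqP; rewrite eq_le w0 andbT leNgt; apply/negP => wpos.
  have wn : omega != 0 by rewrite gt_eqF.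
  have := sinBpos wn; move: Z => /eqP; rewrite mulf_eq0 (negbTE b0) /= => /eqP ->.
  by rewrite ltxx.
- move=> Hsym.
  have Z : beta * sin (k%:R / 2 * (pi - omega)) = 0.
    apply: small_zero => eps he.
    have [d [d0 Hd]] := E (1 / 2) tau0 eps he.
    set m := Num.min d e.
    have m0 : 0 < m by rewrite lt_min d0 e0.
    have md : m <= d by rewrite ge_min lexx.
    have me : m <= e by rewrite ge_min lexx orbT.
    have [_ [_ Hb _]] := Hd (m / 2) ltac:(apply/andP; split; lra).
    have [Hc _] := Hb pi ltac:(apply/andP; split; lra).
    have nz : (- (m / 2), 0) <> (0, 0) :> R * R by move=> [h]; lra.
    have Om : Omega (- (m / 2), 0) by apply: He; rewrite normrN ger0_norm; lra.
    have P0 : (phi (- (m / 2), 0)).2 = 0.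
      have := Hsym _ Om nz.
      rewrite /Sfrak /sigma oppr0.
      move=> /(congr1 snd); cbn [fst snd] => h; lra.
    move: Hc; rewrite cospi sinpi mulrN1 mulr0 P0 mulr0 sin_pihalf mulr1.
    by rewrite sub0r normrN.
  have kE : (k = (k./2).*2 + 1)%N by rewrite -{1}(odd_double_half k) ok addnC.
  have kR' : k%:R = 2 * (k./2)%:R + 1 :> R by rewrite {1}kE natrD -muln2 natrM mulrC.
  have SE : sin (k%:R / 2 * (pi - omega)) = (-1) ^+ (k./2) * cos B.
    have -> : k%:R / 2 * (pi - omega) = - (B - pi / 2) + (k./2)%:R * pi.
      by rewrite /B kR'; field.
    by rewrite sin_npi sinN sinBpihalf opprK.
  move: Z => /eqP; rewrite mulf_eq0 (negbTE b0) /= SE mulf_eq0 signr_eq0 /= => /eqP cB.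
  apply: Bom; apply: cos_inj; rewrite ?in_itv /= ?B0 ?(ltW Bpi) //.
    by apply/andP; split; lra.
  by rewrite cB cos_pihalf.
- move=> hne; exists (2 * beta * cos B), 0; split => //.
  + by rewrite mulf_neq0 ?mulf_neq0 ?(cosB0 hne).
  + by rewrite lexx /=; apply: divr_gt0 => //; lra.
  + exact: exp_sub.
- move=> hne; exists (2 * beta * sin B), (pi / k%:R); split => //.
  + rewrite mulf_neq0 ?mulf_neq0 //; apply/negbT/gt_eqF/sinBpos/eqP/hne.
  + apply/andP; split; [apply: divr_ge0; lra | rewrite ltr_pM2r ?invr_gt0 //; lra].
  + exact: exp_add.
Qed.
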